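(* For all integers $n\ge1$ and $k\ge1$, the number of $k$-quasi-Stirling permutations of size $n$ is $$|\overline{\mathcal{Q}}^k_n|=\frac{(kn)!}{((k-1)n+1)!}=n!\,C_{n,k},\qquad\text{where } C_{n,k}=\frac{1}{(k-1)n+1}\binom{kn}{n}.$$
   Context: A $k$-quasi-Stirling permutation of size $n$ is a permutation $\pi$ of the multiset $\{1^k,2^k,\dots,n^k\}$ (each of $1,\dots,n$ appearing exactly $k$ times) that avoids the patterns $1212$ and $2121$, i.e. there are no indices $i<j<m<\ell$ with $\pi_i=\pi_m\neq\pi_j=\pi_\ell$. $\overline{\mathcal{Q}}^k_n$ denotes the set of these permutations. *)

(* Defs.v *)
From mathcomp Require Import all_boot.
Set Implicit Arguments. Unset Strict Implicit. Unset Printing Implicit Defensive.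

(* A word over the alphabet 'I_n (letter i : 'I_n stands for the value i+1
   in {1,..,n}); it is a permutation of the multiset {1^k,...,n^k} when every
   letter occurs exactly k times. *)
Definition is_multiset_perm (n k : nat) (w : seq 'I_n) : bool :=
  [forall a : 'I_n, count_mem a w == k].

Definition has_1212_2121 (n : nat) (w : seq 'I_n) : bool :=
  [exists i : 'I_(size w), exists j : 'I_(size w),
   exists m : 'I_(size w), exists l : 'I_(size w),
     [&& (i < j)%N, (j < m)%N, (m < l)%N,
         tnth (in_tuple w) i == tnth (in_tuple w) m,
         tnth (in_tuple w) j == tnth (in_tuple w) l &
         tnth (in_tuple w) i != tnth (in_tuple w) j]].

Definition quasi_stirling (n k : nat) : {set (k * n).-tuple 'I_n} :=
  [set w : (k * n).-tuple 'I_n | is_multiset_perm k w && ~~ has_1212_2121 w].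

Definition Cnk (n k : nat) : nat := 'C(k * n, n) %/ ((k - 1) * n + 1).

(* Main.v *)
Require Import Defs.
From mathcomp Require Import all_boot zify.
Set Implicit Arguments. Unset Strict Implicit. Unset Printing Implicit Defensive.

Section Gen.
Variables (T : finType) (k : nat).

Definition Z (a : T) (Bs : seq (seq T)) := flatten (map (cons a) Bs).
Definition build a (f : seq (seq T)) := Z a (take k f) :: drop k f.

Fixpoint gen (m : nat) (S : seq T) (j : nat) {struct m} : seq (seq (seq T)) :=
  let fix g j := match j with
   | 0 => if S is [::] then [:: [::]] else [::]
   | j'.+1 => [seq [::] :: f | f <- g j'] ++
        (if m is m'.+1 then [seq build a f | a <- S, f <- gen m' (rem a S) (j' + k)] else [::])
   end in g j.

Fixpoint W (m : nat) (j : nat) {struct m} : nat :=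
  let fix g j := match j with
   | 0 => (m == 0 : nat)
   | j'.+1 => g j' + (if m is m'.+1 then m * W m' (j' + k) else 0)
   end in g j.

Lemma gen0 m S : gen m S 0 = if S is [::] then [:: [::]] else [::].
Proof. by case: m. Qed.
Lemma genS m S j : gen m S j.+1 = [seq [::] :: f | f <- gen m S j] ++
        (if m is m'.+1 then [seq build a f | a <- S, f <- gen m' (rem a S) (j + k)] else [::]).
Proof. by case: m. Qed.
Lemma W0 m : W m 0 = (m == 0). Proof. by case: m. Qed.
Lemma WS m j : W m j.+1 = W m j + (if m is m'.+1 then m * W m' (j + k) else 0).
Proof. by case: m. Qed.

Lemma sumn_const (A : Type) (s : seq A) c : sumn [seq c | _ <- s] = size s * c.
Proof. by elim: s => //= _ s ->; rewrite mulSn. Qed.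

Lemma size_gen m S j : size S = m -> size (gen m S j) = W m j.
Proof.
elim: m S j => [|m IHm] S j.
  move/size0nil->; elim: j => [|j IHj]; first by rewrite gen0 W0.
  by rewrite genS WS cats0 size_map IHj addn0.
move=> hS; elim: j => [|j IHj].
  by rewrite gen0 W0; case: S hS.
rewrite genS WS size_cat size_map IHj size_allpairs_dep; congr (_ + _).
rewrite -hS -sumn_const; congr sumn; apply/eq_in_map => a aS.
by rewrite IHm // size_rem // hS.
Qed.
Lemma W0j j : W 0 j = 1.
Proof. by elim: j => [|j IHj]; rewrite ?W0 // WS IHj. Qed.
End Gen.

Lemma key (k' m j w1 w2 a b : nat) :
  w1 * a`! = j.+1 * b`! ->
  w2 * (a.+1)`! = (j.+1 + k'.+1) * b`! ->
  a = k' * m.+1 + j.+1 -> b = k'.+1 * m.+1 + j ->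
  (w1 + m.+1 * w2) * (a.+1)`! = j.+2 * (b.+1)`!.
Proof.
move=> h1 h2 ea eb.
rewrite mulnDl -mulnA h2 !factS mulnCA h1.
move: (b`!) => F.
subst. nia.
Qed.

Lemma Wclosed k m j : 0 < k -> 0 < j ->
  W k m j * ((k-1)*m + j)`! = j * (k*m + j - 1)`!.
Proof.
case: k => // k' _; rewrite subn1 /=.
elim: m j => [|m IHm] j j0.
  rewrite W0j mul1n !muln0 !add0n. case: j j0 => // j _. by rewrite subn1 factS.
elim: j j0 => // j IHj _.
rewrite WS.
case: j IHj => [|j] IHj.
  rewrite W0 /= add0n.
  have := IHm k'.+1 isT.
  have -> : k' * m + k'.+1 = (k' * m.+1 + 1) by lia.
  have -> : k'.+1 * m.+1 + 1 - 1 = (k'.+1 * m + k'.+1 - 1).+1 by lia.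
  rewrite factS -mulnA => ->.
  move: (_`!) => F. nia.
have h1 := IHj isT.
have h2 := IHm (j.+1 + k'.+1) isT.
have -> : k' * m.+1 + j.+2 = (k' * m.+1 + j.+1).+1 by lia.
have -> : k'.+1 * m.+1 + j.+2 - 1 = (k'.+1 * m.+1 + j).+1 by lia.
apply: key; [| | by [] | by []].
  by rewrite h1; congr (_ * _`!); lia.
rewrite (_ : (k' * m.+1 + j.+1).+1 = k' * m + (j.+1 + k'.+1)); last by lia.
by rewrite h2; congr (_ * _`!); lia.
Qed.

Section Sub.
Variable T : eqType.
Implicit Types (s t u v : seq T).

Lemma subseq_catP t u v : subseq t (u ++ v) ->
  exists t1 t2, [/\ t = t1 ++ t2, subseq t1 u & subseq t2 v].
Proof.
elim: u t => [|x u IH] t /=; first by move=> h; exists [::], t.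
case: t => [|y t]; first by move=> _; exists [::], [::]; rewrite !sub0seq.
case: eqP => [->|nyx] h.
  have [t1 [t2 [-> h1 h2]]] := IH _ h.
  by exists (x :: t1), t2; split => //=; rewrite eqxx.
have [t1 [t2 [e h1 h2]]] := IH _ h.
exists t1, t2; split => //; apply: subseq_trans h1 (subseq_cons _ _).
Qed.

Lemma subseq_cons_neq x y t s : x != y -> subseq (x :: t) (y :: s) = subseq (x :: t) s.
Proof. by move=> /negbTE /= ->. Qed.

End Sub.

Section Core.
Variables (T : finType) (k : nat).
Hypothesis kpos : 0 < k.
Implicit Types (s t u v w B : seq T) (Bs f g : seq (seq T)) (a x y z : T).

Definition pf w : bool :=
  [forall x, forall y, (x != y) ==> ~~ subseq [:: x; y; x; y] w].
Definition blk w := all (fun z => count_mem z w == k) w && pf w.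
Definition vf (S : seq T) j f :=
  [&& size f == j, all blk f & [forall z, count_mem z (flatten f) == k * (z \in S)]].

Lemma pfP w : reflect (forall x y, x != y -> ~ subseq [:: x; y; x; y] w) (pf w).
Proof.
apply: (iffP forallP) => [h x y nxy hs|h x].
  by move: (forallP (h x) y); rewrite nxy /= hs.
by apply/forallP => y; apply/implyP => nxy; apply/negP; apply: h.
Qed.

Lemma pf_sub w1 w2 : subseq w1 w2 -> pf w2 -> pf w1.
Proof.
move=> s /pfP h; apply/pfP => x y nxy hs; apply: (h x y nxy).
exact: subseq_trans hs s.
Qed.

Lemma pf_cons a B : a \notin B -> pf B -> pf (a :: B).
Proof.
move=> aB /pfP h; apply/pfP => x y nxy.
case: (eqVneq x a) => [->|nxa].
  rewrite /= eqxx => hs; move/negP: aB; apply.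
  by apply: (mem_subseq hs); rewrite !inE eqxx orbT.
by rewrite subseq_cons_neq //; apply: h.
Qed.

Lemma pf_nil : pf [::].
Proof. by apply/pfP. Qed.

Fixpoint dj Bs := if Bs is B :: Bs' then
   all (fun z => z \notin flatten Bs') B && dj Bs' else true.

Lemma ZE a B Bs : Z a (B :: Bs) = (a :: B) ++ Z a Bs.
Proof. by []. Qed.

Lemma memZ a Bs z : z \in Z a Bs -> z = a \/ z \in flatten Bs.
Proof.
elim: Bs => //= B Bs IH; rewrite inE mem_cat => /orP[/eqP->|/orP[h|/IH[]]].
- by left.
- by right; rewrite mem_cat h.
- by left.
- by move=> h; right; rewrite mem_cat h orbT.
Qed.

Lemma com a B Bs z : all (fun z => z \notin flatten Bs) B ->
  z \in a :: B -> z \in Z a Bs -> z = a.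
Proof.
move=> /allP hd; rewrite inE => /orP[/eqP->//|zB] /memZ[//|zf].
by move: (hd z zB); rewrite zf.
Qed.

Lemma noyay a Bs : a \notin flatten Bs -> dj Bs ->
  forall y, y != a -> ~ subseq [:: y; a; y] (Z a Bs).
Proof.
elim: Bs => [|B Bs IH] //; rewrite ZE => haf /andP[hd hdj] y nya.
have [aB aBs] : a \notin B /\ a \notin flatten Bs.
  by move: haf; rewrite /= mem_cat negb_or => /andP.
case/subseq_catP => t1 [t2 [e s1 s2]].
have c z : z \in t1 -> z \in t2 -> z = a.
  by move=> z1 z2; apply: (com hd (mem_subseq s1 z1) (mem_subseq s2 z2)).
move: e s1 s2 c; case: t1 => [|a1 [|a2 [|a3 [|a4 t1]]]] e s1 s2 c.
- by apply: (IH aBs hdj y nya); rewrite e.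
- case: e => E0 E1; subst a1 t2; have eya : y = a by apply: c; rewrite !inE eqxx ?orbT.
  by rewrite eya eqxx in nya.
- case: e => E0 E1 E2; subst a1 a2 t2; have eya : y = a by apply: c; rewrite !inE eqxx ?orbT.
  by rewrite eya eqxx in nya.
- case: e => E0 E1 E2 e; subst a1 a2 a3 t2; move: s1; rewrite subseq_cons_neq // => s1.
  move/negP: aB; apply; apply: (mem_subseq s1).
  by rewrite !inE eqxx orbT.
- by case: e.
Qed.

Lemma pf_Z a Bs : a \notin flatten Bs -> dj Bs -> all pf Bs -> pf (Z a Bs).
Proof.
elim: Bs => [|B Bs IH]; first by move=> *; apply: pf_nil.
rewrite ZE => haf /andP[hd hdj] /andP[pB pBs].
have [aB aBs] : a \notin B /\ a \notin flatten Bs.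
  by move: haf; rewrite /= mem_cat negb_or => /andP.
have IH' := IH aBs hdj pBs.
apply/pfP => x y nxy; case/subseq_catP => t1 [t2 [e s1 s2]].
have c z : z \in t1 -> z \in t2 -> z = a.
  by move=> z1 z2; apply: (com hd (mem_subseq s1 z1) (mem_subseq s2 z2)).
move: e s1 s2 c; case: t1 => [|a1 [|a2 [|a3 [|a4 [|a5 t1]]]]] e s1 s2 c.
- by move/pfP: IH' => /(_ x y nxy); apply; rewrite e.
- case: e => E0 E1; subst a1 t2; have exa : x = a by apply: c; rewrite !inE eqxx ?orbT.
  subst x; apply: (noyay aBs hdj (y:=y)) => //; by rewrite eq_sym.
- case: e => E0 E1 E2; subst a1 a2 t2.
  have exa : x = a by apply: c; rewrite !inE eqxx ?orbT.
  have eya : y = a by apply: c; rewrite !inE eqxx ?orbT.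
  by move: nxy; rewrite exa eya eqxx.
- case: e => E0 E1 E2 E3; subst a1 a2 a3 t2.
  have eya : y = a by apply: c; rewrite !inE eqxx ?orbT.
  subst y; move: s1; rewrite subseq_cons_neq // => s1.
  move/negP: aB; apply; apply: (mem_subseq s1).
  by rewrite !inE eqxx orbT.
- case: e => E0 E1 E2 E3 e; subst a1 a2 a3 a4 t2.
  by move/pfP: (pf_cons aB pB) => /(_ x y nxy); apply.
- by case: e.
Qed.

Lemma decomp a s : exists B0 Bs, s = B0 ++ Z a Bs /\ all (fun B => a \notin B) (B0 :: Bs).
Proof.
elim: s => [|x s [B0 [Bs [-> h]]]]; first by exists [::], [::].
case: (eqVneq x a) => [->|nxa].
  by exists [::], (B0 :: Bs); split.
exists (x :: B0), Bs; split => //.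
move: h => /= /andP[h1 h2]; rewrite h2 andbT inE negb_or h1 andbT.
by rewrite eq_sym.
Qed.

Lemma az_sub a Bs z : z \in flatten Bs -> subseq [:: a; z] (Z a Bs).
Proof.
elim: Bs => [|B Bs IH] // h; rewrite ZE.
have : z \in B ++ flatten Bs by [].
rewrite mem_cat => /orP[zB|zf].
  apply: subseq_trans (prefix_subseq _ _); by rewrite /= eqxx sub1seq.
exact: subseq_trans (IH zf) (suffix_subseq _ _).
Qed.

Lemma dj_of_pf a Bs : pf (Z a Bs) -> all (fun B => a \notin B) Bs -> dj Bs.
Proof.
elim: Bs => [|B Bs IH] // hp /andP[aB aBs] /=; apply/andP; split; last first.
  apply: IH aBs; apply: pf_sub hp; rewrite ZE; exact: suffix_subseq.
apply/allP => z zB; apply/negP => zf.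
have naz : a != z by apply: contraNneq aB => ->.
move/pfP: hp => /(_ a z naz); apply.
rewrite ZE -[ [:: a; z; a; z] ]/([:: a; z] ++ [:: a; z]).
apply: cat_subseq; last exact: az_sub.
by rewrite /= eqxx sub1seq.
Qed.

Lemma count_Z a Bs z :
  count_mem z (Z a Bs) = (a == z) * size Bs + count_mem z (flatten Bs).
Proof.
elim: Bs => [|B Bs IH]; first by rewrite muln0.
rewrite ZE /= count_cat IH count_cat mulnS. by rewrite !addnA; congr (_ + _); rewrite addnAC.
Qed.

Lemma count_dj Bs B z : dj Bs -> B \in Bs -> z \in B ->
  count_mem z (flatten Bs) = count_mem z B.
Proof.
elim: Bs => [|B' Bs IH] //= /andP[hd hdj]; rewrite inE => /orP[/eqP->|BBs] zB;
  rewrite count_cat.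
  by rewrite (count_memPn (allP hd z zB)) addn0.
have zf : z \in flatten Bs by apply/flattenP; exists B.
have zB' : z \notin B' by apply/negP => /(allP hd); rewrite zf.
by rewrite (count_memPn zB') IH.
Qed.

Lemma sub_Z a Bs B : B \in Bs -> subseq B (Z a Bs).
Proof.
elim: Bs => [|B' Bs IH] //; rewrite inE ZE => /orP[/eqP->|h].
  apply: (subseq_trans (subseq_cons B' a)); exact: prefix_subseq.
exact: subseq_trans (IH h) (suffix_subseq _ _).
Qed.

Lemma dj_of_counts Bs : all blk Bs -> (forall z, count_mem z (flatten Bs) <= k) -> dj Bs.
Proof.
elim: Bs => [|B Bs IH] // /andP[bB bBs] hc /=; apply/andP; split.
  apply/allP => z zB; apply/negP => zf.
  have := hc z; rewrite /= count_cat.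
  move: bB => /andP[/allP/(_ z zB)/eqP -> _].
  have : 0 < count_mem z (flatten Bs) by rewrite -has_count has_pred1.
  move: (count_mem z _) => c. lia.
apply: (IH bBs) => z; apply: leq_trans (hc z); rewrite /= count_cat; exact: leq_addl.
Qed.

Lemma blk_Z a Bs : all blk Bs -> a \notin flatten Bs -> dj Bs -> size Bs = k ->
  blk (Z a Bs).
Proof.
move=> hb ha hd hs.
have ca : count_mem a (flatten Bs) = 0 by apply/count_memPn.
apply/andP; split; last by apply: pf_Z => //; apply/allP => B /(allP hb) /andP[].
apply/allP => z /memZ [->|zf]; apply/eqP.
  by rewrite count_Z eqxx mul1n ca addn0 hs.
have [B BBs zB] := flattenP zf.
have naz : (a == z) = false by apply/negbTE; apply: contraNneq ha => ->.
rewrite count_Z (count_dj hd BBs zB) naz mul0n add0n.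
by move: (allP hb B BBs) => /andP[/allP/(_ z zB)/eqP].
Qed.

Lemma vf0 S f : vf S 0 f -> f = [::] /\ S = [::].
Proof.
move=> /and3P[/eqP/size0nil -> _ /forallP hc]; split => //.
case: S hc => [//|a S] hc; move/eqP: (hc a); rewrite mem_head muln1 /= => h.
by move: kpos; rewrite -h.
Qed.

Lemma vf_nil0 : vf [::] 0 [::].
Proof. by apply/and3P; split => //; apply/forallP => z; rewrite in_nil muln0. Qed.

Lemma vf_nil S j f : vf S j f -> vf S j.+1 ([::] :: f).
Proof.
move=> /and3P[/eqP hs ha hc]; apply/and3P; split => //=; first by rewrite hs.
by rewrite ha andbT /blk /= pf_nil.
Qed.

Lemma vf_build S j a g : uniq S -> a \in S -> vf (rem a S) (j + k) g ->
  vf S j.+1 (build k a g).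
Proof.
move=> uS aS /and3P[/eqP hs hb /forallP hc].
have remE z : (z \in rem a S) = (z != a) && (z \in S) by rewrite (mem_rem_uniq a uS) inE.
set Bs := take k g; set f' := drop k g.
have eg : g = Bs ++ f' by rewrite cat_take_drop.
have sBs : size Bs = k by rewrite /Bs size_takel // hs leq_addl.
have haf : a \notin flatten g.
  by apply/count_memPn; move/eqP: (hc a); rewrite remE eqxx /= muln0.
rewrite eg flatten_cat mem_cat negb_or in haf; case/andP: haf => haB haf'.
have /andP[hbB hbf] : all blk Bs && all blk f' by rewrite -all_cat -eg.
have hcB z : count_mem z (flatten Bs) <= k.
  have := hc z; rewrite eg flatten_cat count_cat => /eqP e.
  apply: leq_trans (leq_addr (count_mem z (flatten f')) _) _; rewrite e.
  by case: (z \in _); rewrite ?muln1 ?muln0.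
have hd := dj_of_counts hbB hcB.
rewrite /build -/Bs -/f'; apply/and3P; split.
- by rewrite /= size_drop hs addnK.
- by rewrite /= blk_Z.
apply/forallP => z; rewrite /= count_cat count_Z.
have := hc z; rewrite eg flatten_cat count_cat => /eqP e.
rewrite -addnA e sBs remE.
case: (eqVneq a z) => [<-|naz] /=.
  by rewrite aS mul1n muln0 addn0 muln1.
by rewrite mul0n add0n.
Qed.

Lemma vf_inv S j f : uniq S -> vf S j.+1 f ->
  (exists f', f = [::] :: f' /\ vf S j f') \/
  (exists a g, [/\ a \in S, vf (rem a S) (j + k) g & f = build k a g]).
Proof.
move=> uS; case: f => [|w f']; first by case/and3P.
move=> /and3P[/eqP /= [hs] /andP[hw hbf] /forallP hc].
case: w hw hc => [|a rest] hw hc.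
  left; exists f'; split => //; apply/and3P; split => //; first by rewrite hs.
  by apply/forallP => z; exact: hc z.
right.
have [B0 [Bs [er hall]]] := decomp a rest.
set Cs := B0 :: Bs.
have ew : a :: rest = Z a Cs by rewrite er.
rewrite ew in hw hc; rewrite ew.
have haC : a \notin flatten Cs.
  by apply/negP => /flattenP [B BC aB]; move: (allP hall B BC); rewrite aB.
have caC : count_mem a (flatten Cs) = 0 by apply/count_memPn.
move: hw => /andP[hcw hpw].
have sC : size Cs = k.
  have : a \in Z a Cs by rewrite /Cs ZE /= inE eqxx.
  by move=> /(allP hcw) /eqP; rewrite count_Z eqxx mul1n caC addn0.
have hd : dj Cs := dj_of_pf hpw hall.
have hallC : all (fun B => a \notin B) Cs := hall.
clearbody Cs; clear hall.
have aS : a \in S.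
  move: (hc a).
  rewrite count_cat count_Z eqxx mul1n sC caC.
  case: (a \in S) => //; rewrite muln0 => /eqP.
  move: (count_mem a _) => c; move: kpos; lia.
exists a, (Cs ++ f'); split => //; last first.
  by rewrite /build take_size_cat ?drop_size_cat.
apply/and3P; split.
- by rewrite size_cat sC hs addnC.
- rewrite all_cat hbf andbT; apply/allP => B BC; apply/andP; split.
    apply/allP => z zB.
    have zw : z \in Z a Cs := mem_subseq (sub_Z a BC) zB.
    have naz : (a == z) = false.
      by apply/negbTE; apply: contraTneq zB => <-; move: (allP hallC B BC).
    move: (allP hcw z zw); rewrite count_Z naz mul0n add0n.
    by rewrite (count_dj hd BC zB).
  exact: pf_sub (sub_Z a BC) hpw.
apply/forallP => z; move: (hc z).
rewrite count_cat count_Z => /eqP e.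
rewrite flatten_cat count_cat (mem_rem_uniq a uS) inE.
move: e; case: (eqVneq a z) => [<-|naz].
  rewrite mul1n caC sC aS muln1 add0n addn0 /= muln0.
  move: (count_mem a _) => c; lia.
have nza : (z == a) = false by rewrite eq_sym (negbTE naz).
by rewrite mul0n add0n /= => ->.
Qed.


Definition hdA a (X : seq T) := X = [::] \/ exists X', X = a :: X'.

Lemma hdA_Z a Bs : hdA a (Z a Bs).
Proof. by case: Bs => [|B Bs]; [left | right; exists (B ++ Z a Bs)]. Qed.

Lemma split_lem a B1 B2 X Y : a \notin B1 -> a \notin B2 -> hdA a X -> hdA a Y ->
  B1 ++ X = B2 ++ Y -> B1 = B2 /\ X = Y.
Proof.
elim: B1 B2 => [|b B1 IH] [|c B2] //= h1 h2 hX hY.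
- case: hX => [->//|[X' ->]] [ea _]; move: h2; by rewrite -ea mem_head.
- case: hY => [->//|[Y' ->]] [ea _]; move: h1; by rewrite ea mem_head.
- move: h1 h2; rewrite !inE !negb_or => /andP[_ h1] /andP[_ h2] [-> e].
  by have [-> ->] := IH _ h1 h2 hX hY e.
Qed.

Lemma Z_inj a Bs1 Bs2 : size Bs1 = size Bs2 -> a \notin flatten Bs1 ->
  a \notin flatten Bs2 -> Z a Bs1 = Z a Bs2 -> Bs1 = Bs2.
Proof.
elim: Bs1 Bs2 => [|B1 Bs1 IH] [|B2 Bs2] //= [hs].
rewrite !mem_cat !negb_or => /andP[a1 a1s] /andP[a2 a2s] [e].
have [-> e'] := split_lem a1 a2 (hdA_Z a Bs1) (hdA_Z a Bs2) e.
by rewrite (IH _ hs a1s a2s e').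
Qed.

Lemma gen_mem m S j f : uniq S -> size S = m -> (f \in gen k m S j) = vf S j f.
Proof.
elim: m S j f => [|m IHm] S j f uS hS.
  have S0 : S = [::] by apply: size0nil.
  subst S; elim: j f => [|j IHj] f.
    rewrite gen0 inE; apply/eqP/idP => [->|/vf0 [-> _]] //; exact: vf_nil0.
  rewrite genS cats0; apply/mapP/idP => [[f' hf' ->]|hv].
    by apply: vf_nil; rewrite -IHj.
  case: (vf_inv uS hv) => [[f' [-> hv']]|[a [g [aS _ _]]]] //.
  by exists f'; rewrite // IHj.
elim: j f => [|j IHj] f.
  rewrite gen0; case: S uS hS => // a S' _ _; rewrite in_nil.
  by apply/esym/negP => /vf0 [_].
rewrite genS mem_cat; apply/orP/idP.
  case=> [/mapP [f' hf' ->]| /allpairsPdep [a [g [aS hg ->]]]].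
    by apply: vf_nil; rewrite -IHj.
  apply: vf_build => //; rewrite -IHm ?rem_uniq //.
  by rewrite size_rem // hS.
move=> hv; case: (vf_inv uS hv) => [[f' [-> hv']]|[a [g [aS hg ->]]]].
  by left; apply/mapP; exists f' => //; rewrite IHj.
right; apply/allpairsPdep; exists a, g; split => //.
by rewrite IHm ?rem_uniq // size_rem // hS.
Qed.

Lemma vf_take S a j g : uniq S -> vf (rem a S) (j + k) g ->
  [/\ a \notin flatten (take k g), size (take k g) = k & g = take k g ++ drop k g].
Proof.
move=> uS /and3P[/eqP hs _ /forallP hc]; split; last by rewrite cat_take_drop.
  have := hc a; rewrite mem_rem_uniq // inE eqxx /= muln0 => /eqP /count_memPn h.
  apply: contra h; rewrite -{2}(cat_take_drop k g) flatten_cat mem_cat => ->.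
  by [].
by rewrite size_takel // hs leq_addl.
Qed.

Lemma gen_uniq m (S : seq T) j : uniq S -> size S = m -> uniq (gen k m S j).
Proof.
elim: m S j => [|m IHm] S j uS hS; elim: j => [|j IHj]; rewrite ?gen0 ?genS.
- by case: S uS hS.
- by rewrite cats0 map_inj_uniq // => x y [].
- by case: S uS hS.
rewrite cat_uniq map_inj_uniq; last by move=> x y [].
rewrite IHj /=; apply/andP; split.
  apply/hasPn => x /allpairsPdep [a [g [aS hg ->]]]; apply/negP => /mapP [f' _ e].
  have hv : vf (rem a S) (j + k) g.
    by rewrite -(@gen_mem m (rem a S) (j + k) g) ?rem_uniq // size_rem // hS.
  have [_ sz _] := vf_take uS hv.
  move: e; rewrite /build => [[]].
  case: (take k g) sz => [|B Bs] //= sz0; by move: kpos; rewrite -sz0.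
apply: allpairs_uniq_dep => //.
  move=> a aS; apply: IHm; rewrite ?rem_uniq //.
  by rewrite size_rem // hS.
move=> p1 p2 /allpairsPdep [a1 [g1 [a1S hg1 ->]]] /allpairsPdep [a2 [g2 [a2S hg2 ->]]] /= e.
have hv1 : vf (rem a1 S) (j + k) g1.
  by rewrite -(@gen_mem m (rem a1 S) (j + k) g1) ?rem_uniq // size_rem // hS.
have hv2 : vf (rem a2 S) (j + k) g2.
  by rewrite -(@gen_mem m (rem a2 S) (j + k) g2) ?rem_uniq // size_rem // hS.
have [n1 s1 e1] := vf_take uS hv1.
have [n2 s2 e2] := vf_take uS hv2.
move: e; rewrite /build => [[ez ed]].
have ea : a1 = a2.
  move: ez s1 s2; case: (take k g1) => [|B1 Bs1]; first by move=> _ s; move: kpos; rewrite -s.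
  case: (take k g2) => [|B2 Bs2]; first by move=> _ _ s; move: kpos; rewrite -s.
  by rewrite !ZE /= => [[]].
subst a2.
have et := Z_inj (etrans s1 (esym s2)) n1 n2 ez.
suff -> : g1 = g2 by [].
by rewrite e1 e2 et ed.
Qed.

End Core.

Section Idx.
Variable T : eqType.
Implicit Types (s t : seq T).

Lemma nth_sub0 x0 s q t : q < size s -> subseq t (drop q.+1 s) -> subseq (nth x0 s q :: t) s.
Proof.
move=> hq ht; rewrite -[X in subseq _ X](cat_take_drop q s) (drop_nth x0 hq).
apply: subseq_trans (suffix_subseq _ _); by rewrite /= eqxx.
Qed.

Lemma nth_sub x0 s i t p : p <= i -> i < size s -> subseq t (drop i.+1 s) ->
  subseq (nth x0 s i :: t) (drop p s).
Proof.
move=> hp hi ht.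
have -> : nth x0 s i = nth x0 (drop p s) (i - p) by rewrite nth_drop subnKC.
apply: nth_sub0; first by rewrite size_drop; lia.
by rewrite drop_drop (_ : (i - p).+1 + p = i.+1) //; lia.
Qed.

Lemma sub_nth0 x0 a t s : subseq (a :: t) s ->
  exists i, [/\ i < size s, nth x0 s i = a & subseq t (drop i.+1 s)].
Proof.
elim: s => [|b s IH] //=; case: eqP => [<-|nab] h.
  by exists 0; split => //; rewrite drop0.
by have [i [h1 h2 h3]] := IH h; exists i.+1.
Qed.

Lemma sub_nth x0 a t s p : subseq (a :: t) (drop p s) ->
  exists i, [/\ p <= i, i < size s, nth x0 s i = a & subseq t (drop i.+1 s)].
Proof.
move=> /(sub_nth0 x0) [i [h1 h2 h3]]; exists (p + i); split.
- exact: leq_addr.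
- by move: h1; rewrite size_drop; lia.
- by rewrite -nth_drop.
by move: h3; rewrite drop_drop (_ : i.+1 + p = (p + i).+1) //; lia.
Qed.
End Idx.

Lemma has_pf n (w : seq 'I_n) : has_1212_2121 w = ~~ pf w.
Proof.
apply/idP/idP.
  case/existsP => i /existsP [j /existsP [m /existsP [l]]].
  case/and4P => hij hjm hml /and3P[/eqP eim /eqP ejl nij].
  move: eim ejl nij; set x := tnth _ i => eim ejl nij.
  rewrite !(tnth_nth x) /= in eim ejl nij.
  apply/negP => /pfP /(_ _ _ nij); apply.
  have h4 := @nth_sub _ x w l [::] m.+1 hml (ltn_ord l) (sub0seq _).
  have h3 := @nth_sub _ x w m _ j.+1 hjm (ltn_ord m) h4.
  have h2 := @nth_sub _ x w j _ i.+1 hij (ltn_ord j) h3.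
  have h1 := @nth_sub _ x w i _ 0 (leq0n _) (ltn_ord i) h2.
  have exi : x = nth x w i by exact: (tnth_nth x (in_tuple w) i).
  by move: h1; rewrite drop0 -exi -eim -ejl.
rewrite /pf negb_forall => /existsP [x]; rewrite negb_forall => /existsP [y].
rewrite negb_imply negbK => /andP [nxy hs].
have [i [_ hi ei h1]] := @sub_nth _ x x _ w 0 (eq_ind_r (fun s => subseq _ s) hs (drop0 w)).
have [j [hij hj ej h2]] := @sub_nth _ x y _ w i.+1 h1.
have [m [hjm hm em h3]] := @sub_nth _ x x _ w j.+1 h2.
have [l [hml hl el _]] := @sub_nth _ x y _ w m.+1 h3.
apply/existsP; exists (Ordinal hi); apply/existsP; exists (Ordinal hj).
apply/existsP; exists (Ordinal hm); apply/existsP; exists (Ordinal hl).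
rewrite !(tnth_nth x) /= ei ej em el !eqxx /=.
by rewrite hij hjm hml nxy.
Qed.

Lemma size_count (T : finType) (w : seq T) : size w = \sum_(z : T) count_mem z w.
Proof.
elim: w => [|a w IH] /=; first by rewrite big1.
rewrite big_split /= -IH (bigD1 a) //= eqxx big1 ?addn0 // => z nza.
by rewrite eq_sym (negbTE nza).
Qed.

Lemma card_Q n k : 0 < k -> #|quasi_stirling n k| = W k n 1.
Proof.
move=> kpos.
set S := enum 'I_n.
have uS : uniq S := enum_uniq _.
have sS : size S = n by rewrite size_enum_ord.
rewrite -(size_gen k 1 sS).
rewrite cardE -(size_map (fun t : (k*n).-tuple 'I_n => [:: tval t])).
apply: perm_size; apply: uniq_perm.
- rewrite map_inj_uniq ?enum_uniq // => t1 t2 [] /val_inj //.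
- exact: gen_uniq.
move=> f; rewrite (gen_mem kpos _ _ uS sS).
apply/mapP/idP.
  case=> t; rewrite mem_enum inE => /andP[hm hp] ->.
  rewrite has_pf negbK in hp.
  apply/and3P; split => //=.
    rewrite andbT; apply/andP; split => //; apply/allP => z _; exact: (forallP hm z).
  by apply/forallP => z; rewrite cats0 mem_enum muln1; exact: (forallP hm z).
case/and3P => /eqP hs hb /forallP hc.
case: f hs hb hc => [|w [|]] // _ hb hc.
have hcw z : count_mem z w = k by move: (hc z); rewrite /= cats0 mem_enum muln1 => /eqP.
have sw : size w == k * n.
  rewrite size_count; under eq_bigr => z _ do rewrite hcw.
  by rewrite sum_nat_const card_ord mulnC.
exists (Tuple sw) => //; rewrite mem_enum inE; apply/andP; split.
  by apply/forallP => z; rewrite hcw.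
by rewrite has_pf negbK; case/andP: hb => /andP[_ ->].
Qed.

Lemma p3lem n k : 0 < n -> 0 < k -> ((k - 1) * n + 1) %| 'C(k * n, n).
Proof.
move=> hn hk.
have cop : coprime ((k - 1) * n + 1) n by rewrite coprime_sym /coprime gcdnMDl gcdn1.
rewrite -(Gauss_dvdr _ cop).
case: n hn cop => // n' _ _.
rewrite mul_bin_left (_ : k * n'.+1 - n' = (k - 1) * n'.+1 + 1); first exact: dvdn_mulr.
case: k hk => // k' _; rewrite subn1 /= mulSn; lia.
Qed.

Unset Implicit Arguments.

Theorem theorem4p3 (n k : nat) : (1 <= n)%N -> (1 <= k)%N ->
  #|quasi_stirling n k| = (k * n)`! %/ ((k - 1) * n + 1)`! /\
  #|quasi_stirling n k| = n`! * Cnk n k /\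
  (((k - 1) * n + 1) %| 'C(k * n, n))%N /\
  (((k - 1) * n + 1)`! %| (k * n)`!)%N.
Proof.
move=> hn hk.
have hc := card_Q n hk.
have hW := Wclosed n (j:=1) hk isT.
rewrite mul1n addnK in hW.
set d := (k - 1) * n + 1 in hW *.
have p3 : d %| 'C(k * n, n) by exact: p3lem.
split; first by rewrite hc -hW mulnK // fact_gt0.
split; last first.
  by split => //; rewrite -hW dvdn_mull.
rewrite hc /Cnk -/d.
have hb := bin_fact (leq_pmull n hk).
have e1 : k * n - n = (k - 1) * n by rewrite mulnBl mul1n.
have e2 : d`! = d * ((k - 1) * n)`! by rewrite /d addn1 factS.
have hd : 0 < d by rewrite /d addn1.
have : W k n 1 * d * ((k - 1) * n)`! = 'C(k * n, n) * n`! * ((k - 1) * n)`!.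
  by rewrite -mulnA -e2 hW -hb e1 mulnA.
move/eqP; rewrite eqn_pmul2r ?fact_gt0 // => /eqP.
rewrite -(divnK p3) mulnAC => /eqP; rewrite eqn_pmul2r // => /eqP ->.
by rewrite mulnK // mulnC.
Qed.
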